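(* For every $\gamma>0$, $n\ge1$ and $p\ge1$, $$\frac{1}{n^\gamma}\max_{1\le k\le n}\|\mathbb{E}_0(S_k)\|_p\le c_\gamma\sum_{k\ge n+1}\frac{1}{k^{\gamma+1}}\|\mathbb{E}_0(S_k)\|_p,$$ where $c_\gamma=3\times2^{2\gamma+1}(2^{\gamma+1}+1)$.
   Context: Let $(\Omega,\mathcal{F},\mathbb{P})$ be a probability space and let $T:\Omega\to\Omega$ be a bijective, bimeasurable, measure-preserving transformation. Let $\mathcal{F}_0\subseteq\mathcal{F}$ be a $\sigma$-algebra with $\mathcal{F}_0\subseteq T^{-1}(\mathcal{F}_0)$, and set $\mathcal{F}_i=T^{-i}(\mathcal{F}_0)$ for $i\in\mathbb{Z}$. Let $X_0$ be $\mathcal{F}_0$-measurable with $\mathbb{E}X_0=0$ and $\mathbb{E}X_0^2<\infty$. Put $X_i=X_0\circ T^i$ and $S_n=\sum_{i=0}^{n-1}X_i$. Write $\mathbb{E}_0(\cdot)=\mathbb{E}(\cdot\mid\mathcal{F}_0)$ and let $\|\cdot\|_p$ be the $\mathbb{L}^p$ norm (possibly infinite). *)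

(* Defs.v *)
From HB Require Import structures.
From mathcomp Require Import all_boot all_order all_algebra.
From mathcomp Require Import all_classical all_reals all_analysis.
Set Implicit Arguments. Unset Strict Implicit. Unset Printing Implicit Defensive.
Import Order.TTheory GRing.Theory Num.Theory.
Import numFieldNormedType.Exports.
Local Open Scope classical_set_scope.
Local Open Scope ring_scope.

Definition subsigma_alg {d} {T : measurableType d} (G : set (set T)) :=
  sigma_algebra setT G /\ G `<=` measurable.

Definition meas_wrt {d} {T : measurableType d} {R : realType}
  (G : set (set T)) (f : T -> R) :=
  forall B : set R, measurable B -> G (f @^-1` B).

Definition is_cond_exp {d} {T : measurableType d} {R : realType}
  (P : probability T R) (G : set (set T)) (f g : T -> R) :=
  [/\ meas_wrt G g,
      P.-integrable setT (EFin \o g) &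
      forall A, G A -> (\int[P]_(x in A) (g x)%:E = \int[P]_(x in A) (f x)%:E)%E].

Definition Xseq {T : Type} {R : realType} (Tm : T -> T) (X0 : T -> R) (i : nat) :=
  fun x => X0 (iter i Tm x).
Definition Sseq {T : Type} {R : realType} (Tm : T -> T) (X0 : T -> R) (n : nat) :=
  fun x => \sum_(i < n) Xseq Tm X0 i x.

Definition c_gamma {R : realType} (g : R) : R :=
  3 * (2 `^ (2 * g + 1)) * (2 `^ (g + 1) + 1).

(* Main.v *)
Require Import Defs.
From HB Require Import structures.
From mathcomp Require Import all_boot all_order all_algebra.
From mathcomp Require Import all_classical all_reals all_analysis.
From mathcomp Require Import ring lra zify.
From mathcomp Require Import measurable_realfun.
Import Order.TTheory GRing.Theory Num.Theory.
Import numFieldNormedType.Exports.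
Set Implicit Arguments. Unset Strict Implicit. Unset Printing Implicit Defensive.
Local Open Scope classical_set_scope.
Local Open Scope ring_scope.
Lemma tangent_powR (R : realType) (p u w : R) : 1 <= p -> 0 <= u -> 0 <= w ->
  u `^ p + p * u `^ (p - 1) * (w - u) <= w `^ p.
Proof.
move=> p1 u0 w0.
have p0 : 0 < p by rewrite (lt_le_trans _ p1).
have [->|pn1] := eqVneq p 1.
  by rewrite subrr powRr0 !powRr1// mulr1 mul1r addrC subrK.
have {pn1} p1' : 1 < p by rewrite lt_neqAle eq_sym pn1.
have pm0 : 0 < p - 1 by rewrite subr_gt0.
pose q := p / (p - 1).
have q0 : 0 < q by rewrite divr_gt0.
have qinv : q^-1 = (p - 1) / p by rewrite /q invf_div.
have pq : p^-1 + q^-1 = 1.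
  by rewrite qinv -[X in X + _]div1r -mulrDl addrC subrK divff// gt_eqF.
set a := u `^ (p - 1).
have a0 : 0 <= a by exact: powR_ge0.
have hu : u `^ p = u * a by rewrite /a mulr_powRB1.
have Y := conjugate_powR w0 a0 p0 q0 pq.
have aq : a `^ q = u `^ p by rewrite /a -powRrM /q mulrC divfK// gt_eqF.
rewrite aq in Y.
have Y' : p * (w * a) <= w `^ p + u `^ p * (p - 1).
  have := Y; rewrite -(ler_pM2l p0) mulrDr => /le_trans; apply.
  rewrite qinv; rewrite le_eqVlt; apply/orP; left; apply/eqP; field; exact: lt0r_neq0.
rewrite hu in Y' *; nra.
Qed.

Lemma key_pt (R : realType) (p x z q : R) : 1 <= p -> 0 <= q -> q <= `|x| ->
  q `^ p + (Num.sg x * (p * q `^ (p - 1))) * (z - x) <= `|z| `^ p.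
Proof.
move=> p1 q0 qx.
have p0 : 0 < p by rewrite (lt_le_trans _ p1).
set phi := p * q `^ (p - 1).
have phi0 : 0 <= phi by rewrite mulr_ge0 ?powR_ge0// ltW.
have sgz : Num.sg x * z <= `|z|.
  rewrite (le_trans (ler_norm _))// normrM normr_sg.
  by case: (x != 0); rewrite ?mul1r ?mul0r.
have E : Num.sg x * phi * (z - x) = phi * (Num.sg x * z - `|x|).
  by rewrite normrEsg; ring.
rewrite E (le_trans _ (tangent_powR p1 q0 (normr_ge0 z)))// lerD2l.
rewrite -/phi; apply: ler_wpM2l => //.
by rewrite lerB.
Qed.

Definition Qn (R : realType) (n : nat) (u : R) : R :=
  (minn (Num.truncn (u * 2 ^+ n)) (n * 2 ^ n))%:R / 2 ^+ n.

Section Qn_props.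
Context {R : realType}.
Implicit Types (u v : R) (n : nat).

Lemma Qn_ge0 n u : 0 <= Qn n u.
Proof. by rewrite /Qn divr_ge0. Qed.

Lemma Qn_le n u : 0 <= u -> Qn n u <= u.
Proof.
move=> u0; rewrite /Qn ler_pdivrMr ?exprn_gt0//.
apply: (@le_trans _ _ (Num.truncn (u * 2 ^+ n))%:R).
  by rewrite ler_nat geq_minl.
by rewrite truncn_le mulr_ge0// exprn_ge0.
Qed.

Lemma Qn_le_n n u : Qn n u <= n%:R.
Proof.
rewrite /Qn ler_pdivrMr ?exprn_gt0//.
apply: (@le_trans _ _ (n * 2 ^ n)%:R); first by rewrite ler_nat geq_minr.
by rewrite natrM natrX.
Qed.

Lemma Qn_nd n : {homo @Qn R n : u v / u <= v}.
Proof.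
move=> u v uv; rewrite /Qn ler_pM2r ?invr_gt0 ?exprn_gt0// ler_nat.
rewrite leq_min geq_minr andbT (leq_trans (geq_minl _ _))//.
by apply: le_truncn; rewrite ler_pM2r ?exprn_gt0.
Qed.

Lemma Qn_ndn n u : Qn n u <= Qn n.+1 u.
Proof.
rewrite /Qn; set t1 := minn _ _; set t2 := minn _ _.
have H : (t1 * 2 <= t2)%N.
  rewrite leq_min; apply/andP; split; last first.
    by rewrite (leq_trans (leq_mul (geq_minr _ _) (leqnn 2)))// -mulnA -expnSr leq_mul2r leqnSn orbT.
  rewrite (leq_trans (leq_mul (geq_minl _ _) (leqnn 2)))//.
  have [u0|u0] := leP 0 u; last first.
    have -> : Num.truncn (u * 2 ^+ n) = 0%N.
      by apply/truncn0Pn; rewrite -ltNge (lt_le_trans _ ler01)// pmulr_llt0 ?exprn_gt0.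
    by [].
  rewrite truncn_ge_nat ?mulr_ge0 ?exprn_ge0// natrM.
  rewrite exprS mulrCA [X in _ <= X]mulrC ler_pM2r//.
  by rewrite truncn_le mulr_ge0 ?exprn_ge0.
rewrite ler_pdivrMr ?exprn_gt0// exprS invfM mulrA divfK ?expf_neq0 ?pnatr_eq0//.
by rewrite ler_pdivlMr// -natrM ler_nat.
Qed.

Lemma Qn_close n u : 0 <= u -> u < n%:R -> u - Qn n u <= (2 ^+ n)^-1.
Proof.
move=> u0 un.
have t : (Num.truncn (u * 2 ^+ n) < n * 2 ^ n)%N.
  by rewrite truncn_lt_nat ?mulr_ge0 ?exprn_ge0// natrM natrX ltr_pM2r ?exprn_gt0.
have h : u * 2 ^+ n <= (Num.truncn (u * 2 ^+ n))%:R + 1.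
  by rewrite natr1; exact/ltW/truncnS_gt.
rewrite /Qn (minn_idPl (ltnW t)) lerBlDr.
rewrite -(@ler_pM2r _ (2 ^+ n)) ?exprn_gt0// mulrDl mulVf ?expf_neq0 ?pnatr_eq0//.
by rewrite divfK ?expf_neq0 ?pnatr_eq0// addrC.
Qed.

End Qn_props.

Lemma Qn_pow_cvg (R : realType) (p u : R) : 1 <= p -> 0 <= u ->
  (fun n => (Qn n u) `^ p) @ \oo --> u `^ p.
Proof.
move=> p1 u0.
have p0 : 0 < p by rewrite (lt_le_trans _ p1).
apply/cvgrPdist_le => e e0.
set K := p * u `^ (p - 1) + 1.
have K0 : 0 < K by rewrite ltr_pwDr// mulr_ge0 ?powR_ge0// ltW.
have eK : 0 < e / K by rewrite divr_gt0.
near=> n.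
have un : u < n%:R.
  apply: (lt_le_trans (truncnS_gt u)); rewrite ler_nat.
  by near: n; exists (Num.truncn u).+1.
have sm : 1 / 2 ^+ n < e / K.
  by near: n; exact: (near_infty_natSinv_expn_lt (PosNum eK)).
have Qu := Qn_le n u0.
have Q0 := @Qn_ge0 R n u.
have le1 : Qn n u `^ p <= u `^ p by rewrite ge0_ler_powR// ?ltW// nnegrE.
rewrite ger0_norm ?subr_ge0//.
have tg := tangent_powR p1 u0 Q0.
have cl := Qn_close u0 un.
have pu0 : 0 <= p * u `^ (p - 1) by rewrite mulr_ge0 ?powR_ge0// ltW.
apply: (@le_trans _ _ (p * u `^ (p - 1) * (2 ^+ n)^-1)).
  apply: (@le_trans _ _ (p * u `^ (p - 1) * (u - Qn n u))); first by lra.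
  exact: ler_wpM2l.
apply: (@le_trans _ _ (K * (2 ^+ n)^-1)).
  by apply: ler_wpM2r; [rewrite invr_ge0 exprn_ge0|rewrite lerDl].
rewrite -ler_pdivlMl//; move: sm; rewrite div1r mulrC => /ltW.
Unshelve. all: by end_near. Qed.

Section contraction.
Context d (T : measurableType d) (R : realType) (P : probability T R).
Variables (p : R) (p1 : 1 <= p) (g Z : T -> R).
Hypotheses (mg : measurable_fun setT g) (mZ : measurable_fun setT Z)
 (ig : P.-integrable setT (EFin \o g)) (iZ : P.-integrable setT (EFin \o Z))
 (Hce : forall B : set R, measurable B ->
   (\int[P]_(x in g @^-1` B) (g x)%:E = \int[P]_(x in g @^-1` B) (Z x)%:E)%E).

Let iZg : P.-integrable setT (EFin \o (Z \- g)).
Proof.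
have -> : EFin \o (Z \- g) = ((EFin \o Z) \- (EFin \o g))%E by apply/funext => x /=; rewrite EFinB.
exact: integrableB.
Qed.

Lemma orth (h : R -> R) (s : seq R) : measurable_fun setT h ->
  (forall x, h x \in s) ->
  (\int[P]_x (h (g x) * (Z x - g x))%:E = 0)%E.
Proof.
move=> mh hs.
pose A y := g @^-1` (h @^-1` [set y]).
have mA y : measurable (A y).
  have := mg measurableT (mh measurableT [set y] (measurable_set1 y)).
  by rewrite setTI setTI.
have inA x y : (x \in A y) = (h (g x) == y).
  by apply/idP/eqP => [/set_mem|/mem_set].
have E x : h (g x) * (Z x - g x) =
    \sum_(y <- undup s) (y * \1_(A y) x * (Z x - g x)).
  rewrite -big_distrl /=; congr (_ * _).
  rewrite (bigD1_seq (h (g x))) ?undup_uniq ?mem_undup //=.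
  rewrite indicE inA eqxx mulr1 big1 ?addr0 // => y /negbTE hy.
  by rewrite indicE inA eq_sym hy mulr0.
under eq_integral do rewrite E -sumEFin.
rewrite integral_sum //; last first.
  move=> y.
  have -> : (fun x => (y * \1_(A y) x * (Z x - g x))%:E) =
      ((EFin \o (fun x => (y * \1_(A y) x)%R)) \* (EFin \o (Z \- g)%R))%E.
    by apply/funext => x.
  apply: integrableMr => //.
    by apply: measurable_realfun.measurable_funM => //; exact: measurable_indic.
  exists (`|y| + 1); split; first exact: num_real.
  move=> M My x _; rewrite /= normrM (le_trans _ (ltW My))//.
  rewrite indicE; case: (x \in A y); rewrite ?normr1 ?normr0 ?mulr1 ?mulr0//.
  by rewrite ler_wpDr.
rewrite big1 // => y _.
transitivity (y%:E * \int[P]_(x in A y) ((Z \- g) x)%:E)%E.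
  rewrite -integralZl //; last first.
    exact: (integrableS measurableT (mA y) (@subsetT _ _) iZg).
  rewrite [in RHS]integral_mkcond; apply: eq_integral => x _.
  rewrite /patch indicE; case: ifP => _; rewrite /= ?mulr1 ?mulr0 ?mul0r //.
have -> : (\int[P]_(x in A y) ((Z \- g) x)%:E = 0)%E.
  have iZA := integrableS measurableT (mA y) (@subsetT _ _) iZ.
  have igA := integrableS measurableT (mA y) (@subsetT _ _) ig.
  under eq_integral do rewrite /= EFinB.
  rewrite (integralB (mA y) iZA igA) /=.
  have mhy : measurable (h @^-1` [set y]).
    by rewrite -(setTI (h @^-1` _)); exact: (mh measurableT [set y] (measurable_set1 y)).
  rewrite /A -(Hce mhy) subee //.
  by rewrite -/(A y); exact: integrable_fin_num.
by rewrite mule0.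
Qed.

Let p0 : 0 < p. Proof. by rewrite (lt_le_trans _ p1). Qed.
Let pm0 : 0 <= p - 1. Proof. by rewrite subr_ge0. Qed.

Let psi n (u : R) := p * (Qn n u) `^ (p - 1).
Let psi_ge0 n u : 0 <= psi n u.
Proof. by rewrite /psi mulr_ge0 ?powR_ge0// ltW. Qed.
Let psi_nd n : {homo psi n : u v / u <= v}.
Proof.
move=> u v uv; rewrite /psi ler_wpM2l ?(ltW p0)//.
by rewrite ge0_ler_powR// ?nnegrE ?Qn_ge0// Qn_nd.
Qed.

Let Cf n (x : R) := Num.sg x * psi n `|x|.

Let Cf_nd n : {homo Cf n : x y / x <= y}.
Proof.
move=> x y xy; rewrite /Cf /=.
case: (ltrgt0P x) => hx.
- have hy : 0 < y by exact: lt_le_trans xy.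
  by rewrite (gtr0_sg hx) (gtr0_sg hy) !mul1r (gtr0_norm hy) psi_nd.
- rewrite (ltr0_sg hx) mulN1r.
  case: (ltrgt0P y) => hy.
  + by rewrite (gtr0_sg hy) mul1r (le_trans _ (psi_ge0 _ _))// oppr_le0.
  + by rewrite (ltr0_sg hy) mulN1r lerN2 psi_nd// lerN2.
  + by rewrite hy sgr0 mul0r oppr_le0.
- rewrite hx sgr0 mul0r.
  have hy : 0 <= y by rewrite -hx.
  by rewrite mulr_ge0// sgr_ge0.
Qed.

Let mCf n : measurable_fun setT (Cf n).
Proof. exact: nondecreasing_measurable (Cf_nd n). Qed.

Let Cf_range n x : Cf n x \in [seq sv * (p * (k%:R / 2 ^+ n) `^ (p - 1)) |
    sv <- [:: -1; 0; 1], k <- iota 0 (n * 2 ^ n).+1].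
Proof.
apply/allpairsP; exists (Num.sg x, minn (Num.truncn (`|x| * 2 ^+ n)) (n * 2 ^ n)).
split => //=.
- by case: (ltrgt0P x) => hx; [rewrite (gtr0_sg hx)|rewrite (ltr0_sg hx)|rewrite hx sgr0]; rewrite !inE eqxx ?orbT.
- by rewrite (_ : 0%N :: iota 1 _ = iota 0 (n * 2 ^ n).+1)// mem_iota add0n ltnS geq_minr.
Qed.

Let Cf_bnd n x : `|Cf n x| <= p * n%:R `^ (p - 1).
Proof.
rewrite /Cf normrM normr_sg ger0_norm//.
apply: (@le_trans _ _ (psi n `|x|)).
  by case: (x != 0); rewrite ?mul1r ?mul0r.
rewrite /psi ler_wpM2l ?(ltW p0)//.
by rewrite ge0_ler_powR// ?nnegrE ?Qn_ge0// Qn_le_n.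
Qed.

Let Fq n (u : R) := (Qn n u) `^ p.
Let Fq_nd n : {homo Fq n : u v / u <= v}.
Proof. by move=> u v uv; rewrite /Fq ge0_ler_powR// ?nnegrE ?Qn_ge0 ?(ltW p0)// Qn_nd. Qed.

Let mF n : measurable_fun setT (fun x => Fq n `|g x|).
Proof.
apply: measurableT_comp; first exact: nondecreasing_measurable (Fq_nd n).
exact: measurableT_comp.
Qed.

Let iF n : P.-integrable setT (fun x => (Fq n `|g x|)%:E).
Proof.
apply/integrableP; split; first exact/measurable_EFinP.
apply: (@le_lt_trans _ _ (\int[P]_x (cst (n%:R `^ p)%:E) x)%E).
  apply: ge0_le_integral => //.
  - by apply/measurableT_comp => //; exact/measurable_EFinP.
  - move=> x _; rewrite abse_EFin /= lee_fin (ger0_norm (powR_ge0 _ _)).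
    by rewrite /Fq ge0_ler_powR// ?nnegrE ?Qn_ge0 ?(ltW p0)// Qn_le_n.
rewrite (_ : (\int[P]_x _ = (n%:R `^ p)%:E * P setT)%E); last exact: integral_cst.
by rewrite probability_setT mule1 ltry.
Qed.



Let iZg' : P.-integrable setT (EFin \o (Z \- g)).
Proof.
have -> : EFin \o (Z \- g) = ((EFin \o Z) \- (EFin \o g))%E by apply/funext => x /=; rewrite EFinB.
exact: integrableB.
Qed.

Lemma stepB n :
  (\int[P]_x (Fq n `|g x|)%:E <= \int[P]_x (`|Z x| `^ p)%:E)%E.
Proof.
have [->|fin] := eqVneq (\int[P]_x (`|Z x| `^ p)%:E)%E +oo%E; first exact: leey.
have mZp : measurable_fun setT (fun x => `|Z x| `^ p).
  exact: (measurableT_comp (measurable_powR p) (measurableT_comp (@normr_measurable R setT) mZ)).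
have iZp : P.-integrable setT (fun x => (`|Z x| `^ p)%:E).
  apply/integrableP; split; first exact/measurable_EFinP.
  under eq_integral do rewrite abse_EFin ger0_norm ?powR_ge0//.
  by rewrite ltey.
have iC : P.-integrable setT (fun x => (Cf n (g x) * (Z x - g x))%:E).
  have -> : (fun x => (Cf n (g x) * (Z x - g x))%:E) =
      ((EFin \o (Cf n \o g)) \* (EFin \o (Z \- g)%R))%E by apply/funext.
  apply: integrableMr => //; first exact: measurableT_comp.
  exists (p * n%:R `^ (p - 1)); split; first exact: num_real.
  move=> M HM x _; apply: le_trans (ltW HM); exact: Cf_bnd.
have o := orth (mCf n) (Cf_range n).
rewrite -[leLHS]adde0 -o -integralD //.
apply: le_integral => //; first exact: integrableD.
move=> x _; rewrite -EFinD lee_fin.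
rewrite /Fq /Cf /psi /=; apply: key_pt => //; [exact: Qn_ge0|exact: Qn_le].
Qed.



Lemma stepC :
  (\int[P]_x (`|g x| `^ p)%:E <= \int[P]_x (`|Z x| `^ p)%:E)%E.
Proof.
pose G n x := (Fq n `|g x|)%:E.
have mG n : measurable_fun setT (G n) by exact/measurable_EFinP.
have G0 n x : setT x -> (0 <= G n x)%E by move=> _; rewrite lee_fin powR_ge0.
have ndG x : setT x -> {homo G^~ x : n m / (n <= m)%N >-> (n <= m)%E}.
  move=> _; apply/nondecreasing_seqP => n; rewrite /G lee_fin /Fq.
  by rewrite ge0_ler_powR// ?nnegrE ?Qn_ge0 ?(ltW p0)// Qn_ndn.
have mc := monotone_convergence P measurableT mG G0 ndG.
have -> : (\int[P]_x (`|g x| `^ p)%:E = \int[P]_x (fun x0 => limn (G^~ x0)) x)%E.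
  apply: eq_integral => x _.
  have cv := Qn_pow_cvg p1 (normr_ge0 (g x)).
  have -> : G^~ x = EFin \o (fun n => Qn n `|g x| `^ p) by [].
  rewrite EFin_lim; last by apply/cvg_ex; eexists; exact: cv.
  by rewrite (cvg_lim _ cv).
rewrite mc; apply: lime_le.
  apply: ereal_nondecreasing_is_cvgn => m n mn.
  apply: ge0_le_integral => //; first by move=> x _; exact: G0.
  by move=> x _; exact: ndG.
by apply: nearW => n; exact: stepB.
Qed.

Lemma contraction :
  ('N[P]_(p%:E)[EFin \o g] <= 'N[P]_(p%:E)[EFin \o Z])%E.
Proof.
rewrite unlock /=.
have E (f : T -> R) : (\int[P]_x (`|(EFin \o f) x| `^ p) = \int[P]_x (`|f x| `^ p)%:E)%E.
  by apply: eq_integral => x _ /=.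
rewrite !E; apply: gt0_ler_poweR; first by rewrite invr_ge0 ltW.
- by rewrite in_itv /= leey andbT integral_ge0// => x _; rewrite lee_fin powR_ge0.
- by rewrite in_itv /= leey andbT integral_ge0// => x _; rewrite lee_fin powR_ge0.
exact: stepC.
Qed.

End contraction.

Lemma c_gamma_ge (R : realType) (gam : R) : (0 < gam)%R -> (2 * 3 `^ (gam + 1) <= c_gamma gam)%R.
Proof.
move=> g0.
have e1 : (3 `^ (gam + 1) = 3 `^ gam * 3 :> R)%R.
  by rewrite powRD ?powRr1 ?pnatr_eq0 ?implybT.
have e2 : (2 `^ (2 * gam + 1) = 4 `^ gam * 2 :> R)%R.
  rewrite powRD ?powRr1 ?pnatr_eq0 ?implybT//.
  by rewrite powRrM (_ : (2:R) `^ 2 = 4)// -[X in X `^ _]/(2%:R) powR_mulrn// expr2 -natrM.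
have h34 : (3 `^ gam <= 4 `^ gam :> R)%R.
  by apply: ge0_ler_powR; rewrite ?nnegrE; lra.
have h2 : (0 <= 2 `^ (gam + 1) :> R)%R by exact: powR_ge0.
have h3 : (0 <= 3 `^ gam :> R)%R by exact: powR_ge0.
rewrite /c_gamma e1 e2; nra.
Qed.

Section combinatorics.
Context {R : realType}.
Local Open Scope ereal_scope.

Lemma sub_series (u : nat -> \bar R) (m0 s len : nat) :
  (forall i, 0 <= u i) -> (m0 <= s)%N ->
  \sum_(i < len) u (s + i)%N <= \sum_(m0 <= i <oo) u i.
Proof.
move=> u0 ms.
apply: (@le_trans _ _ (\sum_(m0 <= i < s + len) u i)); last first.
  by apply: nneseries_lim_ge => i _ _; exact: u0.
elim: len => [|len ih].
  by rewrite big_ord0 addn0; apply: sume_ge0 => i _; exact: u0.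
rewrite big_ord_recr /= addnS big_nat_recr /=; last by rewrite (leq_trans ms)// leq_addr.
exact: leeD2r.
Qed.

Lemma sum_cst_nat (x : \bar R) (m : nat) : 0 <= x ->
  \sum_(i < m) x = m%:R%:E * x.
Proof.
move=> x0; elim: m => [|m ih]; first by rewrite big_ord0 mul0e.
by rewrite big_ord_recr /= ih -natr1 EFinD ge0_muleDl// mul1e.
Qed.

Lemma comb (a : nat -> \bar R) (gam : R) (n : nat) :
  (0 < gam)%R -> (1 <= n)%N -> (forall k, 0 <= a k) ->
  (forall k j, a k <= a (k + j)%N + a j) ->
  ((n%:R `^ gam)^-1)%:E * \big[Order.max/-oo]_(1 <= k < n.+1) a k
   <= (c_gamma gam)%:E * \sum_(n.+1 <= k <oo) (((k%:R `^ (gam + 1))^-1)%:E * a k).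
Proof.
move=> g0 n1 a0 sub.
set w := fun k : nat => ((k%:R `^ (gam + 1))^-1)%R.
set S := \sum_(n.+1 <= k <oo) _.
have w0 k : (0 <= w k)%R by rewrite /w invr_ge0 powR_ge0.
have u0 k : 0 <= (w k)%:E * a k by rewrite mule_ge0// lee_fin.
have S0 : 0 <= S by apply: nneseries_ge0 => k _ _; exact: u0.
set W := ((3 * n%:R) `^ (gam + 1))%R.
have W0 : (0 < W)%R by rewrite powR_gt0// mulr_gt0// ltr0n.
have aW m : (n.+1 <= m)%N -> (m <= 3 * n)%N -> a m <= W%:E * ((w m)%:E * a m).
  move=> h1 h2; rewrite muleA -EFinM.
  have h : (1 <= W * w m)%R.
    have m0 : (0 < m%:R :> R)%R by rewrite ltr0n (leq_trans _ h1).
    rewrite /w /W ler_pdivlMr; last by rewrite powR_gt0.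
    rewrite mul1r; apply: ge0_ler_powR.
    - by rewrite addr_ge0// ltW.
    - by rewrite nnegrE ltW.
    - by rewrite nnegrE mulr_ge0.
    by move: h2; rewrite -(ler_nat R) natrM.
  by rewrite -[leLHS]mul1e lee_wpmul2r// lee_fin.
have key k : (1 <= k <= n)%N -> n%:R%:E * a k <= W%:E * S + W%:E * S.
  move=> /andP[k1 kn].
  rewrite -sum_cst_nat//.
  apply: (@le_trans _ _ (\sum_(i < n) (a (k + (n.+1 + i))%N + a (n.+1 + i)%N))).
    by apply: lee_sum => i _; exact: sub.
  rewrite big_split /=; apply: leeD.
  - apply: (@le_trans _ _ (\sum_(i < n) W%:E * ((w (k + n.+1 + i)%N)%:E * a (k + n.+1 + i)%N))).
      apply: lee_sum => i _; rewrite addnA; apply: aW.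
        by clear; lia.
      have := ltn_ord i; move: kn; clear; lia.
    rewrite -ge0_sume_distrr; last by move=> i _.
    apply: lee_wpmul2l; first by rewrite lee_fin ltW.
    by apply: sub_series => //; rewrite leq_addl.
  - apply: (@le_trans _ _ (\sum_(i < n) W%:E * ((w (n.+1 + i)%N)%:E * a (n.+1 + i)%N))).
      apply: lee_sum => i _; apply: aW; first by rewrite leq_addr.
      have := ltn_ord i; clear; lia.
    rewrite -ge0_sume_distrr; last by move=> i _.
    apply: lee_wpmul2l; first by rewrite lee_fin ltW.
    exact: sub_series.
set N := ((n%:R `^ gam)^-1)%R.
have nR0 : (0 < n%:R :> R)%R by rewrite ltr0n.
have N0 : (0 < N)%R by rewrite invr_gt0 powR_gt0.
rewrite big_nat_cond.
apply: (big_ind (fun m => N%:E * m <= (c_gamma gam)%:E * S)).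
- by rewrite mulrNy gtr0_sg// mul1e leNye.
- move=> x y hx hy; rewrite /Order.max; by case: ifP.
move=> k /andP[/andP[k1 kn] _].
have hk : n%:R%:E * a k <= W%:E * S + W%:E * S by apply: key; rewrite k1; exact: kn.
rewrite -ge0_muleDl ?lee_fin ?(ltW W0)// -EFinD in hk.
have eN : N%:E * a k = (N / n%:R)%:E * (n%:R%:E * a k).
  by rewrite muleA -EFinM divfK // gt_eqF.
have Nn0 : (0 <= N / n%:R)%R by rewrite divr_ge0 ?ltW.
rewrite eN; apply: (le_trans (lee_wpmul2l _ hk)); first by rewrite lee_fin.
rewrite muleA -EFinM; apply: lee_wpmul2r => //; rewrite lee_fin.
have nγ0 : (0 < n%:R `^ gam :> R)%R by rewrite powR_gt0.
have eW : (W = 3 `^ (gam + 1) * (n%:R `^ gam * n%:R))%R.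
  rewrite /W powRM ?ler0n// (@powRD _ n%:R gam 1) ?powRr1 ?ler0n//.
  by rewrite (gt_eqF nR0) implybT.
have -> : (N / n%:R * (W + W) = 2 * 3 `^ (gam + 1))%R.
  by rewrite eW /N; field; rewrite ?gt_eqF.
exact: c_gamma_ge.
Qed.

End combinatorics.

Section cov.
Context d (T : measurableType d) (R : realType) (P : probability T R).
Variables (phi : T -> T) (mphi : measurable_fun setT phi)
  (pres : forall A, measurable A -> P (phi @^-1` A) = P A).
Local Open Scope ereal_scope.

Lemma cov_ge0 (h : T -> \bar R) (B : set T) : measurable B ->
  measurable_fun setT h -> (forall x, 0 <= h x) ->
  \int[P]_(x in phi @^-1` B) h (phi x) = \int[P]_(x in B) h x.
Proof.
move=> mB mh h0.
have := ge0_integral_pushforward mphi P mB (measurable_funTS mh) (fun y _ => h0 y).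
move=> <-; apply: eq_measure_integral => A mA _.
by rewrite /pushforward; exact: pres.
Qed.

Lemma cov_int (f : T -> R) : measurable_fun setT f ->
  P.-integrable setT (EFin \o f) -> P.-integrable setT (EFin \o (f \o phi)).
Proof.
move=> mf /integrableP[_ fi]; apply/integrableP; split.
  by apply/measurable_EFinP; exact: measurableT_comp.
have mh : measurable_fun setT (fun x => (`|f x|)%:E).
  by apply/measurable_EFinP; exact: measurableT_comp.
have := cov_ge0 measurableT mh (fun x => ltac:(by rewrite lee_fin)).
rewrite preimage_setT => E.
have -> : (fun x => `|(EFin \o (f \o phi)) x|) = (fun x => (`|f (phi x)|)%:E).
  by apply/funext => x; rewrite /= ?abse_EFin.
rewrite E; move: fi.
have -> : (fun x => `|(EFin \o f) x|) = (fun x => (`|f x|)%:E).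
  by apply/funext => x; rewrite /= ?abse_EFin.
done.
Qed.

Lemma cov (f : T -> R) (B : set T) : measurable B -> measurable_fun setT f ->
  P.-integrable setT (EFin \o f) ->
  \int[P]_(x in phi @^-1` B) (f (phi x))%:E = \int[P]_(x in B) (f x)%:E.
Proof.
move=> mB mf fi.
have mEf : measurable_fun setT (EFin \o f) by exact/measurable_EFinP.
have i2 : P.-integrable (phi @^-1` B) ((EFin \o f) \o phi).
  apply: (integrableS measurableT _ (@subsetT _ _) (cov_int mf fi)).
  by rewrite -(setTI (_ @^-1` _)); exact: mphi.
have := integral_pushforward mphi mEf i2 mB.
move=> E; rewrite [RHS](eq_measure_integral (pushforward P phi)) ?E//.
by move=> A mA _; rewrite /pushforward; apply/esym; exact: pres.
Qed.

End cov.

Unset Implicit Arguments.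

Theorem mainTheorem16 (d : measure_display) (Omega : measurableType d)
  (R : realType) (P : probability Omega R)
  (Tm : Omega -> Omega)
  (Tbij : bijective Tm)
  (Tmeas : measurable_fun setT Tm)
  (Tmeas_inv : forall A, measurable A -> measurable (Tm @` A))
  (Tpres : forall A, measurable A -> P (Tm @^-1` A) = P A)
  (F0 : set (set Omega))
  (F0sig : subsigma_alg F0)
  (F0inc : forall A, F0 A -> exists B, F0 B /\ A = Tm @^-1` B)
  (X0 : Omega -> R)
  (X0F0 : meas_wrt F0 X0)
  (X0mean : (\int[P]_x (X0 x)%:E = 0)%E)
  (X0sq : (\int[P]_x ((X0 x) ^+ 2)%:E < +oo)%E)
  (E0S : nat -> Omega -> R)
  (E0S_ce : forall k, is_cond_exp P F0 (Sseq Tm X0 k) (E0S k))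
  (gamma : R) (gamma_gt0 : 0 < gamma)
  (n : nat) (n_ge1 : (1 <= n)%N)
  (p : R) (p_ge1 : 1 <= p) :
  (((n%:R `^ gamma)^-1)%:E *
     \big[Order.max/-oo]_(1 <= k < n.+1) 'N[P]_(p%:E)[EFin \o E0S k]
   <= (c_gamma gamma)%:E *
     \sum_(n.+1 <= k <oo) (((k%:R `^ (gamma + 1))^-1)%:E *
                            'N[P]_(p%:E)[EFin \o E0S k]))%E.
Proof.
have mF0 : forall A, F0 A -> measurable A := F0sig.2.
have mw (f : Omega -> R) : meas_wrt F0 f -> measurable_fun setT f.
  by move=> hf _ B mB; rewrite setTI; exact/mF0/hf.
have mX0 := mw _ X0F0.
have mT k : measurable_fun setT (iter k Tm).
  elim: k => [|k ih]; first exact: measurable_id.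
  exact: (measurableT_comp Tmeas ih).
have mTpre A : measurable A -> measurable (Tm @^-1` A).
  by move=> mA; rewrite -(setTI (_ @^-1` _)); exact: Tmeas.
have pT k A : measurable A -> P (iter k Tm @^-1` A) = P A.
  elim: k A => [|k ih] A mA; first by [].
  have -> : iter k.+1 Tm @^-1` A = iter k Tm @^-1` (Tm @^-1` A) by [].
  by rewrite ih; [exact: Tpres|exact: mTpre].
have F0T k A : F0 A -> exists B, F0 B /\ A = iter k Tm @^-1` B.
  elim: k A => [|k ih] A FA; first by exists A.
  have [B1 [FB1 ->]] := ih A FA.
  have [B2 [FB2 ->]] := F0inc B1 FB1.
  by exists B2.
have iX0 : P.-integrable setT (EFin \o X0).
  apply/integrableP; split; first exact/measurable_EFinP.
  apply: (@le_lt_trans _ _ (\int[P]_x ((cst 1%:E) x + ((X0 x) ^+ 2)%:E))%E).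
    apply: ge0_le_integral => //.
    - by apply/measurableT_comp => //; exact/measurable_EFinP.
    - apply: emeasurable_funD => //; apply/measurable_EFinP.
      exact: measurable_funX.
    - move=> x _ /=; rewrite ?abse_EFin -EFinD lee_fin.
      rewrite -real_normK ?num_real//; have := sqr_ge0 (`|X0 x| - 1); nra.
  rewrite ge0_integralD //; last 2 first.
  - by move=> x _; rewrite lee_fin sqr_ge0.
  - by apply/measurable_EFinP; exact: measurable_funX.
  rewrite (_ : (\int[P]_x _ = 1%:E * P setT)%E); last exact: integral_cst.
  by rewrite probability_setT mule1 lte_add_pinfty// ltry.
have mXi i : measurable_fun setT (Xseq Tm X0 i).
  exact: (measurableT_comp mX0 (mT i)).
have iXi i : P.-integrable setT (EFin \o Xseq Tm X0 i).
  exact: (cov_int (mT i) (pT i) mX0 iX0).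
have mS m : measurable_fun setT (Sseq Tm X0 m).
  exact: (measurable_sum _ (fun i : 'I_m => mXi i)).
have iS m : P.-integrable setT (EFin \o Sseq Tm X0 m).
  have -> : EFin \o Sseq Tm X0 m = (fun x => \sum_(i < m) (Xseq Tm X0 i x)%:E)%E.
    by apply/funext => x; rewrite /= sumEFin.
  by apply: integrable_sum => // i _; exact: iXi.
have shift k j x : Sseq Tm X0 (k + j) x - Sseq Tm X0 k x = Sseq Tm X0 j (iter k Tm x).
  rewrite /Sseq big_split_ord /= addrAC subrr add0r; apply: eq_bigr => i _.
  by rewrite /Xseq /= addnC iterD.
have toT0 (f : Omega -> R) : meas_wrt F0 f ->
    measurable_fun (setT : set (g_sigma_algebraType F0)) f.
  move=> hf _ B mB; rewrite setTI; exact: sub_sigma_algebra (hf B mB).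
have ofT0 (f : Omega -> R) :
    measurable_fun (setT : set (g_sigma_algebraType F0)) f -> meas_wrt F0 f.
  move=> hf B mB; have := hf measurableT B mB; rewrite setTI.
  by rewrite (measurable_g_measurableTypeE F0sig.1).
have ce1 m : meas_wrt F0 (E0S m) by case: (E0S_ce m).
have ce2 m : P.-integrable setT (EFin \o E0S m) by case: (E0S_ce m).
have ce3 m : forall A, F0 A ->
    (\int[P]_(x in A) (E0S m x)%:E = \int[P]_(x in A) (Sseq Tm X0 m x)%:E)%E.
  by case: (E0S_ce m).
have mE m : measurable_fun setT (E0S m) := mw _ (ce1 m).
have sub k j : ('N[P]_(p%:E)[EFin \o E0S k] <=
    'N[P]_(p%:E)[EFin \o E0S (k + j)%N] + 'N[P]_(p%:E)[EFin \o E0S j])%E.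
  pose Dk := fun x => E0S (k + j)%N x - E0S k x.
  pose Zf := E0S j \o iter k Tm.
  have mD : measurable_fun setT Dk := measurable_funB (mE (k + j)%N) (mE k).
  have FD : meas_wrt F0 Dk.
    exact: ofT0 _ (measurable_funB (toT0 _ (ce1 (k + j)%N)) (toT0 _ (ce1 k))).
  have iD : P.-integrable setT (EFin \o Dk).
    have -> : EFin \o Dk = ((EFin \o E0S (k + j)%N) \- (EFin \o E0S k))%E.
      by apply/funext => x /=; rewrite EFinB.
    exact: integrableB.
  have mZ : measurable_fun setT Zf := measurableT_comp (mE j) (mT k).
  have iZ : P.-integrable setT (EFin \o Zf) := cov_int (mT k) (pT k) (mE j) (ce2 j).
  have Hce : forall B : set R, measurable B ->
      (\int[P]_(x in Dk @^-1` B) (Dk x)%:E = \int[P]_(x in Dk @^-1` B) (Zf x)%:E)%E.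
    move=> B mB; have FA := FD B mB; set A := Dk @^-1` B.
    have mA := mF0 _ FA.
    have [B' [FB' eA]] := F0T k A FA; have mB' := mF0 _ FB'.
    have i1 m := integrableS measurableT mA (@subsetT _ _) (ce2 m).
    have i2 m := integrableS measurableT mA (@subsetT _ _) (iS m).
    transitivity (\int[P]_(x in A) (Sseq Tm X0 (k + j)%N x - Sseq Tm X0 k x)%:E)%E.
      under eq_integral do rewrite /Dk EFinB.
      rewrite (integralB mA (i1 _) (i1 _)) (ce3 _ _ FA) (ce3 _ _ FA).
      under [RHS]eq_integral do rewrite EFinB.
      by rewrite (integralB mA (i2 _) (i2 _)).
    under eq_integral do rewrite shift.
    rewrite eA (cov (mT k) (pT k) mB' (mS j) (iS j)) -(ce3 _ _ FB').
    by rewrite -(cov (mT k) (pT k) mB' (mE j) (ce2 j)).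
  have hc := contraction p_ge1 mD mZ iD iZ Hce.
  have eZ : ('N[P]_(p%:E)[EFin \o Zf] = 'N[P]_(p%:E)[EFin \o E0S j])%E.
    rewrite unlock /=; congr (_ `^ _)%E.
    have e (f : Omega -> R) :
        (\int[P]_x (`|(EFin \o f) x| `^ p) = \int[P]_x (`|f x| `^ p)%:E)%E.
      by apply: eq_integral => x _ /=.
    rewrite !e.
    have mh : measurable_fun setT (fun x => (`|E0S j x| `^ p)%:E).
      apply/measurable_EFinP.
      exact: (measurableT_comp (measurable_powR p) (measurableT_comp (@normr_measurable R setT) (mE j))).
    have := cov_ge0 (mT k) (pT k) measurableT mh (fun x => ltac:(by rewrite lee_fin powR_ge0)).
    by rewrite preimage_setT.
  have p1E : (1 <= p%:E)%E by rewrite lee_fin.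
  have hm := eminkowski P (mE (k + j)%N) (measurable_funN mD) p1E.
  have e1 : (E0S (k + j)%N \+ \- Dk)%R = E0S k.
    by apply/funext => x; rewrite /Dk /=; ring.
  have e2 : ('N[P]_(p%:E)[EFin \o (\- Dk)%R] = 'N[P]_(p%:E)[EFin \o Dk])%E.
    rewrite unlock /=; congr (_ `^ _)%E; apply: eq_integral => x _.
    by rewrite /= normrN.
  rewrite e1 e2 in hm; apply: (le_trans hm); rewrite leeD2l// -eZ.
  exact: hc.
exact: (comb gamma_gt0 n_ge1 (fun k => Lnorm_ge0 P _ _) sub).
Qed.
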